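(* Let $l\ge1$ and consider a path graph with vertices $v_0,\dots,v_l$, where $v_i,v_j$ are adjacent iff $|i-j|=1$, whose vertices are each labeled with one of two colors $5$ and $6$. A move consists of choosing two adjacent vertices with the same color and changing the colors of both. If either $l$ is even and $v_0,v_l$ have different colors, or $l$ is odd and $v_0,v_l$ have the same color, then there is a finite sequence of moves after which $v_0$ and $v_l$ have both switched colors and every other vertex has its original color. *)

(* Defs.v *)
From HB Require Import structures.
From mathcomp Require Import all_boot.
Set Implicit Arguments. Unset Strict Implicit. Unset Printing Implicit Defensive.

Inductive color := C5 | C6.

Definition swapc (a : color) : color := match a with C5 => C6 | C6 => C5 end.

Definition color_eqb (a b : color) : bool :=
  match a, b with C5, C5 | C6, C6 => true | _, _ => false end.
Lemma color_eqP : Equality.axiom color_eqb.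
Proof. by case; case; constructor. Qed.
HB.instance Definition _ := hasDecEq.Build color color_eqP.

(* A coloring of the path v_0, ..., v_l: vertex v_i gets color c i
   (values of c at indices > l are irrelevant and never changed). *)
Definition coloring := nat -> color.

Definition move (l : nat) (c c' : coloring) : Prop :=
  exists i : nat, i < l /\ c i = c i.+1 /\
    forall j : nat, c' j = if (j == i) || (j == i.+1) then swapc (c j) else c j.

Inductive reachable (l : nat) : coloring -> coloring -> Prop :=
| reach_refl c : reachable l c c
| reach_step c c' c'' : move l c c' -> reachable l c' c'' -> reachable l c c''.

(* Main.v *)
Require Import Defs.
From mathcomp Require Import all_boot.
From Stdlib Require Import FunctionalExtensionality.
From mathcomp Require Import zify.

Lemma reach_trans l c d e : reachable l c d -> reachable l d e -> reachable l c e.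
Proof.
elim=> [//|x y z Hm _ IH] He; exact: reach_step Hm (IH He).
Qed.

Definition par (p : bool) (x : color) := if p then swapc x else x.

Definition T (a : nat) (c : coloring) : coloring := fun j =>
  if j == a then swapc (c a.+1) else if j == a.+1 then swapc (c a) else c j.

Definition Sw (a b : nat) (c : coloring) : coloring := fun j =>
  if j == a then par (odd (a + b)) (c b)
  else if j == b then par (odd (a + b)) (c a) else c j.

Lemma swapcK x : swapc (swapc x) = x. Proof. by case: x. Qed.

Lemma neq_swap x y : x <> y -> y = swapc x.
Proof. by case: x; case: y. Qed.

Lemma reach_T l a c : a < l -> reachable l c (T a c).
Proof.
move=> al.
case: (eqVneq (c a) (c a.+1)) => [E|N].
  apply: reach_step (reach_refl _ _).
  exists a; split=> //; split=> // j.
  rewrite /T; case: (eqVneq j a) => [->|ja] /=; first by rewrite E.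
  case: (eqVneq j a.+1) => [->|//]; rewrite /= ?eqxx ?orbT ?E /=.
  by [].
move/eqP: N => N.
have -> : T a c = c; last exact: reach_refl.
apply: functional_extensionality => j; rewrite /T.
case: (eqVneq j a) => [->|_]; first by rewrite (neq_swap _ _ N) swapcK.
case: (eqVneq j a.+1) => [->|//].
by rewrite (neq_swap _ _ N).
Qed.

Lemma reach_Sw l k : forall a c, a + k.+1 <= l -> reachable l c (Sw a (a + k.+1) c).
Proof.
elim: k => [|k IH] a c H.
  have -> : Sw a (a + 1) c = T a c.
    apply: functional_extensionality => j; rewrite /Sw /T addn1.
    have -> : odd (a + a.+1) = true by rewrite addnS /= addnn odd_double.
    by [].
  rewrite addn1 in H; exact: reach_T H.
have -> : Sw a (a + k.+2) c = T a (Sw a.+1 (a.+1 + k.+1) (T a c)).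
  apply: functional_extensionality => j.
  rewrite /Sw /T !addSn !addnS /=.
  have nb : (a + k).+2 != a by lia.
  have nb1 : (a + k).+2 != a.+1 by lia.
  have nb' : a != (a + k).+2 by lia.
  have nb1' : a.+1 != (a + k).+2 by lia.
  have n0 : (a == a.+1) = false by lia.
  have n0' : (a.+1 == a) = false by lia.
  rewrite (negbTE nb) (negbTE nb1) (negbTE nb') (negbTE nb1') n0 n0' !eqxx.
  case: (eqVneq j a) => [_|ja]; first by case: (odd (a + (a + k))) => /=; rewrite ?swapcK.
  case: (eqVneq j a.+1) => [Ej|ja1].
    by subst j; rewrite (negbTE nb1') swapcK.
  case: (eqVneq j (a + k).+2) => [Ej|jb] //.
  by case: (odd (a + (a + k))) => /=; rewrite ?swapcK.
have Ha : a < l by lia.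
apply: reach_trans (reach_T l a c Ha) _.
apply: reach_trans (IH a.+1 _ _) (reach_T l a _ Ha).
lia.
Qed.

Theorem lemma13 (l : nat) (c : coloring) :
  1 <= l ->
  (~~ odd l /\ c 0 <> c l) \/ (odd l /\ c 0 = c l) ->
  exists c' : coloring, reachable l c c' /\
    c' 0 = swapc (c 0) /\ c' l = swapc (c l) /\
    (forall i : nat, 0 < i < l -> c' i = c i).
Proof.
case: l => [//|k] _ H.
exists (Sw 0 k.+1 c); split; first exact: (reach_Sw k.+1 k 0 c (leqnn _)).
rewrite /Sw /=.
split; last split.
- case: H => [[Ho N]|[Ho E]]; move: Ho; rewrite /par /=; case: (odd k) => //= _.
  + by rewrite (neq_swap _ _ N).
  + by rewrite E.
- case: H => [[Ho N]|[Ho E]]; move: Ho; rewrite /par /=; case: (odd k) => //= _.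
  + by rewrite eqxx (neq_swap _ _ N) swapcK.
  + by rewrite eqxx E.
- move=> i /andP [i0 il].
  by rewrite (gtn_eqF i0) (ltn_eqF il).
Qed.
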